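(* Let $R$ be a finite set of $n$ robots, with coordination space $\chi=\mathbb{R}^n$, obstacle region $\chi^{\mathrm{obs}}$, dynamics, brake-safe set $B_G$ and control law $g^G$ as described in the context, where $G$ is any directed graph on vertex set $R$. Then $B_G$ is positively invariant in discrete time for the system under control law $g^G$: $$\forall s\in B_G,\ \forall k\in\mathbb{N},\quad \Phi(k,s,g^G)\in B_G.$$ Moreover, the configuration remains in $\chi^{\mathrm{free}}_G$ in continuous time: $$\forall s\in B_G,\ \forall t\ge 0,\quad \pi_x(\Phi(t,s,g^G))\in \chi^{\mathrm{free}}_G.$$
   Context: Robots $i\in R$ move along fixed paths; $x_i\in\mathbb{R}$ is the curvilinear coordinate of robot $i$, $x=(x_i)_{i\in R}\in\chi:=\mathbb{R}^n$, and $\{\mathbf e_i\}$ is the canonical basis of $\chi$. For each unordered pair $\{i,j\}$, $\chi^{\mathrm{obs}}_{ij}\subset\chi$ (configurations where $i$ and $j$ collide) is an open cylinder of the form $C_{ij}+\mathrm{span}\{\mathbf e_k:k\ne i,j\}$ where $C_{ij}$ is an open bounded convex subset of $\mathrm{span}\{\mathbf e_i,\mathbf e_j\}$ (possibly empty); $\chi^{\mathrm{obs}}=\bigcup_{\{i,j\}}\chi^{\mathrm{obs}}_{ij}$. For $i\neq j$ define $\chi^{\mathrm{obs}}_{i\succ j}:=\chi^{\mathrm{obs}}_{ij}-\mathbb{R}_+\mathbf e_i+\mathbb{R}_+\mathbf e_j$ (Minkowski sum). A priority graph is a directed graph $G$ with vertex set $R$ and edge set $E(G)$; an edge $(i,j)$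 means $i$ has priority over $j$. Set $\chi^{\mathrm{obs}}_G:=\bigcup_{(i,j)\in E(G)}\chi^{\mathrm{obs}}_{i\succ j}$, $\chi^{\mathrm{free}}_{i\succ j}:=\chi\setminus\chi^{\mathrm{obs}}_{i\succ j}$, $\chi^{\mathrm{free}}_G:=\chi\setminus\chi^{\mathrm{obs}}_G$. Dynamics: robot $i$ has state $s_i=(x_i,v_i)\in S_i:=\mathbb{R}\times[0,\overline v_i]$ with speed limit $\overline v_i\ge 0$, and $\dot x_i=v_i$, $\dot v_i=\mathbf u_i(t)\,\delta(\mathbf u_i(t),v_i(t))$, where $\delta(u,v)=0$ if ($v=0$ and $u<0$) or ($v=\overline v_i$ and $u>0$), and $\delta=1$ otherwise. Controls take values in $U_i=[\underline u_i,\overline u_i]$ with $\underline u_i<0<\overline u_i$ and are piecewise constant on each slot $[k,k+1)$, $k\in\mathbb{N}$; $\mathbf U_i$ is the set of such controls, $\mathbf U=\prod_i\mathbf U_i$, $S=\prod_i S_i$, $U=\prod_i U_i$. $\Phi_i(t,s_i,\mathbf u_i)$ is the resulting flow of robot $i$ from $s_i$, and $\Phi(t,s,\mathbf u)=(\Phi_i(t,s_i,\mathbf u_i))_i$. $\underline{\mathbf u}$ denotes the constant control equal to $(\underline u_i)_i$. $\pi_x(s)=x$ and $\pi_{x,i}(s)=x_i$. Brake-safe states: $B_G:=\{s\in S:\ \pi_x(\Phi(t,s,\underline{\mathbf u}))\in\chi^{\mathrm{free}}_G\ \forall t\ge0\}$. Impulse control: $\mathbf u_i^{\mathrm{impulse}}(t)=\overline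 u_i$ for $t\in[0,1)$ and $=\underline u_i$ for $t\ge1$. Worst-case control w.r.t. $i$: $\tilde{\mathbf u}^i$ with $\tilde{\mathbf u}^i_i=\mathbf u_i^{\mathrm{impulse}}$ and $\tilde{\mathbf u}^i_j=\underline{\mathbf u}_j$ (constant $\underline u_j$) for $j\ne i$. Control law $g^G:S\to U$: $g^G_i(s)=\underline u_i$ if there exists $(j,i)\in E(G)$ and $t\ge0$ with $\pi_x(\Phi(t,s,\tilde{\mathbf u}^i))\in\chi^{\mathrm{obs}}_{j\succ i}$; otherwise $g^G_i(s)=\overline u_i$. For a feedback law $h:S\to U$, $\Phi(t,s,h)$ denotes $\Phi(t,s,\mathbf u)$ where $\mathbf u\in\mathbf U$ satisfies $\mathbf u(k)=h(\Phi(k,s,\mathbf u))$ for all $k\in\mathbb{N}$. *)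

(* Defs.v *)
From Stdlib Require Import Reals Lra ClassicalEpsilon.
From Coquelicot Require Import Coquelicot.
Open Scope R_scope.

(* A configuration x ∈ χ = R^n is a function nat -> R (only coordinates i < n matter).
   Obstacle data: for each pair (i,j), C i j : R -> R -> Prop is the set C_ij ⊂ span{e_i,e_j},
   written in coordinates (x_i, x_j).  χ^obs_ij = { x | C i j (x i) (x j) }. *)

Definition open2 (A : R -> R -> Prop) : Prop :=
  forall a b, A a b -> exists eps, 0 < eps /\
    forall a' b', Rabs (a' - a) < eps -> Rabs (b' - b) < eps -> A a' b'.
Definition bounded2 (A : R -> R -> Prop) : Prop :=
  exists M, forall a b, A a b -> Rabs a <= M /\ Rabs b <= M.
Definition convex2 (A : R -> R -> Prop) : Prop :=
  forall a b a' b' l, A a b -> A a' b' -> 0 <= l <= 1 ->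
    A (l * a + (1 - l) * a') (l * b + (1 - l) * b').

Definition obstacles_ok (n : nat) (C : nat -> nat -> R -> R -> Prop) : Prop :=
  forall i j, (i < n)%nat -> (j < n)%nat -> i <> j ->
    open2 (C i j) /\ bounded2 (C i j) /\ convex2 (C i j) /\
    (forall a b, C j i b a <-> C i j a b).

Definition obs_ij (C : nat -> nat -> R -> R -> Prop) (i j : nat) (x : nat -> R) : Prop :=
  C i j (x i) (x j).

(* χ^obs_{i≻j} = χ^obs_ij - R_+ e_i + R_+ e_j (Minkowski sum) *)
Definition obs_prio (C : nat -> nat -> R -> R -> Prop) (i j : nat) (x : nat -> R) : Prop :=
  exists a b y, 0 <= a /\ 0 <= b /\ obs_ij C i j y /\
    forall k, x k = y k - (if Nat.eqb k i then a else 0) + (if Nat.eqb k j then b else 0).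

Definition graph_on (n : nat) (E : nat -> nat -> Prop) : Prop :=
  forall i j, E i j -> (i < n)%nat /\ (j < n)%nat /\ i <> j.

Definition obs_G C (E : nat -> nat -> Prop) (x : nat -> R) : Prop :=
  exists i j, E i j /\ obs_prio C i j x.
Definition free_G C E (x : nat -> R) : Prop := ~ obs_G C E x.

Definition state : Type := ((nat -> R) * (nat -> R))%type.

Definition clamp (vb w : R) : R := Rmin vb (Rmax 0 w).

(* Solution of v' = u δ(u,v) with v(0) = v0 ∈ [0,vb] and constant u on a slot:
   v(τ) = clamp(v0 + u τ).  Velocity at integer times: *)
Fixpoint vel_int (vb : R) (u : nat -> R) (v0 : R) (k : nat) : R :=
  match k with
  | O => v0
  | S k' => clamp vb (vel_int vb u v0 k' + u k')
  end.

Definition slot (t : R) : nat := Z.to_nat (Int_part t).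

Definition vel (vb : R) (u : nat -> R) (v0 : R) (t : R) : R :=
  let k := slot t in clamp vb (vel_int vb u v0 k + u k * (t - INR k)).

Definition pos (vb : R) (u : nat -> R) (x0 v0 : R) (t : R) : R :=
  x0 + RInt (vel vb u v0) 0 t.

(* Controls: u i k = value of robot i's control on slot [k,k+1). *)
Definition Phi (vbar : nat -> R) (u : nat -> nat -> R) (s : state) (t : R) : state :=
  (fun i => pos (vbar i) (u i) (fst s i) (snd s i) t,
   fun i => vel (vbar i) (u i) (snd s i) t).

Definition in_S (n : nat) (vbar : nat -> R) (s : state) : Prop :=
  forall i, (i < n)%nat -> 0 <= snd s i <= vbar i.

Definition brake (ul : nat -> R) : nat -> nat -> R := fun i _ => ul i.

Definition in_BG n C E (vbar ul : nat -> R) (s : state) : Prop :=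
  in_S n vbar s /\
  forall t, 0 <= t -> free_G C E (fst (Phi vbar (brake ul) s t)).

Definition worst (ul uu : nat -> R) (i : nat) : nat -> nat -> R :=
  fun j k => if Nat.eqb j i then (match k with O => uu j | S _ => ul j end) else ul j.

Definition gG C (E : nat -> nat -> Prop) (vbar ul uu : nat -> R) (s : state) : nat -> R :=
  fun i =>
    if excluded_middle_informative
         (exists j, E j i /\ exists t, 0 <= t /\
             obs_prio C j i (fst (Phi vbar (worst ul uu i) s t)))
    then ul i else uu i.

Definition feedback_ctrl (n : nat) (vbar : nat -> R) (h : state -> nat -> R)
  (s : state) (u : nat -> nat -> R) : Prop :=
  forall k i, (i < n)%nat -> u i k = h (Phi vbar u s (INR k)) i.

(* Main.v *)
Require Import Defs.
From Stdlib Require Import Reals Lra ZArith Arith Lia FunctionalExtensionality ClassicalEpsilon.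
From Coquelicot Require Import Coquelicot.
Open Scope R_scope.

Lemma clamp_range vb w : 0 <= vb -> 0 <= clamp vb w <= vb.
Proof. intros; unfold clamp, Rmin, Rmax; repeat destruct Rle_dec; lra. Qed.

Lemma clamp_id vb w : 0 <= w <= vb -> clamp vb w = w.
Proof. intros; unfold clamp, Rmin, Rmax; repeat destruct Rle_dec; lra. Qed.

Lemma clamp_mono vb a b : a <= b -> clamp vb a <= clamp vb b.
Proof. intros; unfold clamp, Rmin, Rmax; repeat destruct Rle_dec; lra. Qed.

Lemma clamp_lip vb a b : Rabs (clamp vb a - clamp vb b) <= Rabs (a - b).
Proof.
  unfold clamp, Rmin, Rmax; repeat destruct Rle_dec; unfold Rabs;
  repeat destruct Rcase_abs; lra.
Qed.

Lemma Int_part_nat m t : 0 <= t < 1 -> Int_part (INR m + t) = Z.of_nat m.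
Proof.
  intros Ht. unfold Int_part.
  assert (H : (Z.of_nat m + 1)%Z = up (INR m + t)).
  { apply tech_up; rewrite plus_IZR, <- INR_IZR_INZ; simpl; lra. }
  rewrite <- H. ring.
Qed.

Lemma slot_nat m t : 0 <= t < 1 -> slot (INR m + t) = m.
Proof. intros Ht; unfold slot; rewrite Int_part_nat by auto; apply Nat2Z.id. Qed.

Lemma vel_at vb w v0 m t : 0 <= t < 1 ->
  vel vb w v0 (INR m + t) = clamp vb (vel_int vb w v0 m + w m * t).
Proof.
  intros Ht; unfold vel; cbv zeta; rewrite slot_nat by auto.
  replace (INR m + t - INR m) with t by ring; reflexivity.
Qed.

Lemma decomp t : 0 <= t -> exists m tau, 0 <= tau < 1 /\ t = INR m + tau.
Proof.
  intros Ht. destruct (base_Int_part t) as [H1 H2].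
  assert (Hp : (0 <= Int_part t)%Z).
  { assert (-1 < IZR (Int_part t)) by lra.
    apply lt_IZR in H. lia. }
  exists (Z.to_nat (Int_part t)), (t - IZR (Int_part t)).
  rewrite INR_IZR_INZ, Z2Nat.id by auto. split; [lra|ring].
Qed.

Lemma vel_int_range vb w v0 k : 0 <= vb -> 0 <= v0 <= vb -> 0 <= vel_int vb w v0 k <= vb.
Proof. intros; destruct k; simpl; [auto | apply clamp_range; auto]. Qed.

Lemma vel_range vb w v0 t : 0 <= vb -> 0 <= vel vb w v0 t <= vb.
Proof. intros; unfold vel; apply clamp_range; auto. Qed.

Lemma vel_nat vb w v0 m : 0 <= vb -> 0 <= v0 <= vb -> vel vb w v0 (INR m) = vel_int vb w v0 m.
Proof.
  intros. replace (INR m) with (INR m + 0) by ring. rewrite vel_at by lra.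
  rewrite Rmult_0_r, Rplus_0_r. apply clamp_id, vel_int_range; auto.
Qed.

Lemma vel_closed vb w v0 m t : 0 <= vb -> 0 <= v0 <= vb -> 0 <= t <= 1 ->
  vel vb w v0 (INR m + t) = clamp vb (vel_int vb w v0 m + w m * t).
Proof.
  intros Hb Hv Ht. destruct (Rle_lt_or_eq_dec t 1 (proj2 Ht)) as [Hl|He].
  - apply vel_at; lra.
  - subst t. replace (INR m + 1) with (INR (S m)) by (rewrite S_INR; ring).
    rewrite vel_nat by auto. simpl. rewrite Rmult_1_r. reflexivity.
Qed.

Lemma cont_aff vb a c d z : continuous (fun t => clamp vb (a + c * (t - d))) z.
Proof.
  apply continuity_pt_filterlim. intros eps Heps.
  exists (eps / (Rabs c + 1)). split.
  { apply Rdiv_lt_0_compat; [lra|]. pose proof (Rabs_pos c); lra. }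
  intros y [_ Hy]. unfold R_dist in *. simpl in *. unfold R_dist in *.
  eapply Rle_lt_trans; [apply clamp_lip|].
  replace (a + c * (y - d) - (a + c * (z - d))) with (c * (y - z)) by ring.
  rewrite Rabs_mult.
  pose proof (Rabs_pos c). pose proof (Rabs_pos (y - z)).
  apply Rle_lt_trans with ((Rabs c + 1) * Rabs (y - z)).
  { apply Rmult_le_compat_r; lra. }
  apply Rmult_lt_reg_l with (/ (Rabs c + 1)).
  { apply Rinv_0_lt_compat; lra. }
  rewrite <- Rmult_assoc, Rinv_l by lra. rewrite Rmult_1_l.
  unfold Rdiv in Hy. lra.
Qed.

Lemma exR_slot vb w v0 m t : 0 <= t <= 1 -> ex_RInt (vel vb w v0) (INR m) (INR m + t).
Proof.
  intros Ht.
  apply ex_RInt_ext with (fun y => clamp vb (vel_int vb w v0 m + w m * (y - INR m))).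
  - intros x Hx. rewrite Rmin_left, Rmax_right in Hx by lra.
    replace x with (INR m + (x - INR m)) at 2 by ring.
    rewrite vel_at by lra. reflexivity.
  - apply (@ex_RInt_continuous R_CompleteNormedModule). intros; apply cont_aff.
Qed.

Lemma exR_nat vb w v0 m : ex_RInt (vel vb w v0) 0 (INR m).
Proof.
  induction m.
  - apply ex_RInt_point.
  - rewrite S_INR. eapply ex_RInt_Chasles; [apply IHm|]. apply exR_slot; lra.
Qed.

Lemma exR0 vb w v0 t : 0 <= t -> ex_RInt (vel vb w v0) 0 t.
Proof.
  intros Ht. destruct (decomp t Ht) as [m [tau [Htau ->]]].
  eapply ex_RInt_Chasles; [apply exR_nat|]. apply exR_slot; lra.
Qed.

Lemma exR vb w v0 a b : 0 <= a <= b -> ex_RInt (vel vb w v0) a b.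
Proof.
  intros H. apply (@ex_RInt_Chasles_2 R_CompleteNormedModule) with 0; [lra|]. apply exR0; lra.
Qed.

Lemma vel_int_shift vb w v0 k m :
  vel_int vb (fun j => w (k + j)%nat) (vel_int vb w v0 k) m = vel_int vb w v0 (k + m).
Proof.
  induction m.
  - simpl. rewrite Nat.add_0_r. reflexivity.
  - simpl. rewrite IHm, Nat.add_succ_r. reflexivity.
Qed.

Lemma vel_shift vb w v0 k t : 0 <= vb -> 0 <= v0 <= vb -> 0 <= t ->
  vel vb w v0 (INR k + t) = vel vb (fun j => w (k + j)%nat) (vel vb w v0 (INR k)) t.
Proof.
  intros Hb Hv Ht. destruct (decomp t Ht) as [m [tau [Htau ->]]].
  replace (INR k + (INR m + tau)) with (INR (k + m) + tau) by (rewrite plus_INR; ring).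
  rewrite !vel_at by auto. rewrite vel_nat by auto. rewrite vel_int_shift. reflexivity.
Qed.

Lemma pos_shift vb w x0 v0 k t : 0 <= vb -> 0 <= v0 <= vb -> 0 <= t ->
  Defs.pos vb w x0 v0 (INR k + t) =
  Defs.pos vb (fun j => w (k + j)%nat) (Defs.pos vb w x0 v0 (INR k)) (vel vb w v0 (INR k)) t.
Proof.
  intros Hb Hv Ht. unfold Defs.pos at 1 2.
  pose proof (pos_INR k).
  rewrite <- (RInt_Chasles _ 0 (INR k)); [| apply exR; lra | apply exR; lra].
  change (plus ?a ?b) with (a + b). rewrite <- Rplus_assoc. f_equal.
  assert (HH := RInt_comp_lin (vel vb w v0) 1 (INR k) 0 t).
  replace (1 * 0 + INR k) with (INR k) in HH by ring.
  replace (1 * t + INR k) with (INR k + t) in HH by ring.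
  rewrite <- HH by (apply exR; lra).
  apply RInt_ext. intros y Hy. rewrite Rmin_left, Rmax_right in Hy by lra.
  change (scal 1 ?z) with (Rmult 1 z). rewrite Rmult_1_l.
  replace (1 * y + INR k) with (INR k + y) by ring.
  apply vel_shift; auto; lra.
Qed.

Lemma vel_first vb w w' v t : w 0%nat = w' 0%nat -> 0 <= t <= 1 ->
  vel vb w v t = vel vb w' v t.
Proof.
  intros Hw Ht. destruct (Rle_lt_or_eq_dec t 1 (proj2 Ht)) as [Hl|He].
  - replace t with (INR 0 + t) by (simpl; ring). rewrite !vel_at by lra.
    simpl. rewrite Hw. reflexivity.
  - subst t. replace 1 with (INR 1 + 0) by (simpl; ring). rewrite !vel_at by lra.
    simpl. rewrite Hw, !Rmult_0_r. reflexivity.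
Qed.

Lemma pos_first vb w w' x v t : w 0%nat = w' 0%nat -> 0 <= t <= 1 ->
  Defs.pos vb w x v t = Defs.pos vb w' x v t.
Proof.
  intros Hw Ht. unfold Defs.pos. f_equal. apply RInt_ext.
  intros y Hy. rewrite Rmin_left, Rmax_right in Hy by lra.
  apply vel_first; auto; lra.
Qed.

Lemma vel_int_mono vb w w' v m : (forall j, w j <= w' j) ->
  vel_int vb w v m <= vel_int vb w' v m.
Proof.
  intros Hw. induction m; simpl; [lra|]. apply clamp_mono. specialize (Hw m). lra.
Qed.

Lemma pos_mono vb w w' x v t : (forall j, w j <= w' j) -> 0 <= t ->
  Defs.pos vb w x v t <= Defs.pos vb w' x v t.
Proof.
  intros Hw Ht. unfold Defs.pos. apply Rplus_le_compat_l.
  apply RInt_le; auto; try (apply exR; lra).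
  intros y Hy. destruct (decomp y ltac:(lra)) as [m [tau [Htau ->]]].
  rewrite !vel_at by auto. apply clamp_mono.
  apply Rplus_le_compat; [apply vel_int_mono; auto|].
  apply Rmult_le_compat_r; [lra|auto].
Qed.

Lemma pos0 vb w x v : Defs.pos vb w x v 0 = x.
Proof. unfold Defs.pos. rewrite RInt_point. change (x + 0 = x). ring. Qed.

Lemma vel0 vb w v : 0 <= vb -> 0 <= v <= vb -> vel vb w v 0 = v.
Proof. intros. change 0 with (INR 0). rewrite vel_nat by auto. reflexivity. Qed.

Definition rctl (c ul : R) : nat -> R := fun m => match m with O => c | S _ => ul end.

Lemma F1 vb w x0 v0 k ul tau : 0 <= vb -> 0 <= v0 <= vb -> 0 <= tau <= 1 ->
  Defs.pos vb w x0 v0 (INR k + tau) =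
  Defs.pos vb (rctl (w k) ul) (Defs.pos vb w x0 v0 (INR k)) (vel vb w v0 (INR k)) tau.
Proof.
  intros. rewrite pos_shift by (auto; lra). apply pos_first; auto.
  simpl. rewrite Nat.add_0_r. reflexivity.
Qed.

Lemma F1v vb w v0 k ul tau : 0 <= vb -> 0 <= v0 <= vb -> 0 <= tau <= 1 ->
  vel vb w v0 (INR k + tau) = vel vb (rctl (w k) ul) (vel vb w v0 (INR k)) tau.
Proof.
  intros. rewrite vel_shift by (auto; lra). apply vel_first; auto.
  simpl. rewrite Nat.add_0_r. reflexivity.
Qed.

Lemma F2 vb w x0 v0 k ul t : 0 <= vb -> 0 <= v0 <= vb -> 0 <= t ->
  Defs.pos vb (fun _ => ul) (Defs.pos vb w x0 v0 (INR (S k))) (vel vb w v0 (INR (S k))) t =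
  Defs.pos vb (rctl (w k) ul) (Defs.pos vb w x0 v0 (INR k)) (vel vb w v0 (INR k)) (1 + t).
Proof.
  intros Hb Hv Ht. replace (1 + t) with (INR 1 + t) by (simpl; ring).
  pose proof (vel_range vb w v0 (INR k) Hb).
  rewrite pos_shift by auto.
  replace (INR 1) with 1 by (simpl; ring).
  rewrite <- F1, <- F1v by (auto; lra). rewrite S_INR. reflexivity.
Qed.

Lemma obs_mono C a b x z : a <> b -> obs_prio C a b x -> z a <= x a -> x b <= z b ->
  obs_prio C a b z.
Proof.
  intros Hab [A [B [y [HA [HB [Hy Hx]]]]]] Ha Hb.
  assert (Hxa := Hx a). assert (Hxb := Hx b).
  rewrite Nat.eqb_refl in Hxa, Hxb.
  rewrite (proj2 (Nat.eqb_neq a b) Hab) in Hxa.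
  rewrite (proj2 (Nat.eqb_neq b a) (not_eq_sym Hab)) in Hxb.
  exists (y a - z a), (z b - y b),
    (fun k => if Nat.eqb k a then y a else if Nat.eqb k b then y b else z k).
  split; [lra|]. split; [lra|]. split.
  - unfold obs_ij in *. rewrite Nat.eqb_refl, (proj2 (Nat.eqb_neq b a) (not_eq_sym Hab)), Nat.eqb_refl.
    auto.
  - intros k. destruct (Nat.eqb_spec k a); destruct (Nat.eqb_spec k b); subst; try lia; lra.
Qed.

Theorem theorem1 (n : nat) (C : nat -> nat -> R -> R -> Prop) (E : nat -> nat -> Prop)
  (vbar ul uu : nat -> R) :
  obstacles_ok n C ->
  graph_on n E ->
  (forall i, (i < n)%nat -> 0 <= vbar i) ->
  (forall i, (i < n)%nat -> ul i < 0 < uu i) ->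
  forall (s : state) (u : nat -> nat -> R),
    in_BG n C E vbar ul s ->
    feedback_ctrl n vbar (gG C E vbar ul uu) s u ->
    (forall k : nat, in_BG n C E vbar ul (Phi vbar u s (INR k))) /\
    (forall t, 0 <= t -> free_G C E (fst (Phi vbar u s t))).
Proof.
  intros Hok Hg Hvb Hu s u HBG Hfb.
  assert (Hv0 : forall i, (i < n)%nat -> 0 <= snd s i <= vbar i) by apply HBG.
  assert (Hcr : forall k i, (i < n)%nat -> ul i <= u i k).
  { intros k i Hi. rewrite Hfb by auto. unfold gG.
    destruct excluded_middle_informative; specialize (Hu i Hi); lra. }
  assert (STEP : forall k, in_BG n C E vbar ul (Phi vbar u s (INR k)) ->
    forall T, 0 <= T -> forall a b, E a b -> ~ obs_prio C a b
      (fun i => Defs.pos (vbar i) (rctl (u i k) (ul i)) (fst (Phi vbar u s (INR k)) i)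
                    (snd (Phi vbar u s (INR k)) i) T)).
  { intros k [_ HZ] T HT a b Eab Hob. destruct (Hg a b Eab) as [Ha [Hb Hab]].
    pose proof (Hfb k b Hb) as Hub. unfold gG in Hub.
    destruct excluded_middle_informative as [Hex|Hnex].
    - apply (HZ T HT). exists a, b. split; auto.
      eapply obs_mono; [exact Hab | exact Hob | |]; unfold Phi, brake; cbn [fst snd].
      + apply pos_mono; auto. intros [|j]; simpl; [apply Hcr; auto | lra].
      + rewrite Hub. apply pos_mono; auto. intros [|j]; simpl; lra.
    - apply Hnex. exists a. split; auto. exists T. split; auto.
      eapply obs_mono; [exact Hab | exact Hob | |]; unfold Phi, worst; cbn [fst snd].
      + rewrite (proj2 (Nat.eqb_neq a b) Hab).
        apply pos_mono; auto. intros [|j]; simpl; [apply Hcr; auto | lra].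
      + rewrite Nat.eqb_refl, Hub. apply pos_mono; auto. intros [|j]; simpl; lra. }
  assert (IND : forall k, in_BG n C E vbar ul (Phi vbar u s (INR k))).
  { induction k.
    - split.
      + intros i Hi. unfold Phi; cbn [snd]. apply vel_range; auto.
      + intros t Ht [a [b [Eab Hob]]]. destruct (Hg a b Eab) as [Ha [Hb Hab]].
        apply (proj2 HBG t Ht). exists a, b. split; auto.
        eapply obs_mono; [exact Hab | exact Hob | |]; unfold Phi; cbn [fst snd];
          change (INR 0) with 0; rewrite pos0, vel0 by auto; lra.
    - split.
      + intros i Hi. unfold Phi; cbn [snd]. apply vel_range; auto.
      + intros t Ht [a [b [Eab Hob]]]. destruct (Hg a b Eab) as [Ha [Hb Hab]].
        apply (STEP k IHk (1 + t) ltac:(lra) a b Eab).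
        eapply obs_mono; [exact Hab | exact Hob | |]; unfold Phi, brake; cbn [fst snd].
        * rewrite (F2 _ _ _ _ _ (ul a)) by auto; lra.
        * rewrite (F2 _ _ _ _ _ (ul b)) by auto; lra. }
  split; [exact IND|].
  intros t Ht [a [b [Eab Hob]]]. destruct (Hg a b Eab) as [Ha [Hb Hab]].
  destruct (decomp t Ht) as [k [tau [Htau ->]]].
  apply (STEP k (IND k) tau ltac:(lra) a b Eab).
  eapply obs_mono; [exact Hab | exact Hob | |]; unfold Phi; cbn [fst snd].
  - rewrite (F1 _ _ _ _ _ (ul a)) by (auto; lra); lra.
  - rewrite (F1 _ _ _ _ _ (ul b)) by (auto; lra); lra.
Qed.
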